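(* Let $p_s\in(0,1)$, $p_f=1-p_s$, let $K\ge1$ be an integer and let $p_0,p\in[0,1]$ with $p_0+Kp=1$. Let $(h(t))_{t\in\mathbb{N}}$ be i.i.d. with $\mathbb{P}[h(t)=1]=p_s$, $\mathbb{P}[h(t)=0]=p_f$, and let $(\delta(t))_{t\in\mathbb{N}}$ be i.i.d., independent of $(h(t))$, with $\mathbb{P}[\delta(t)=0]=p_0$ and $\mathbb{P}[\delta(t)=k]=p$ for $1\le k\le K$. Define the positive-integer-valued process $\Delta(t)$ by $$\Delta(t)=\begin{cases}\delta(t)+1, & h(t)=1,\\ \max\{1,\ \Delta(t-1)+\delta(t)-\delta(t-1)+1\}, & h(t)=0.\end{cases}$$ Then the stationary distribution $\pi_{k,i}=\lim_{t\to\infty}\mathbb{P}[\delta(t)=k,\Delta(t)=i]$, $k\in\{0,1,\dots,K\}$, $i\ge1$, of the Markov chain $(\delta(t),\Delta(t))$ is given by $$\pi_{k,i}=\begin{cases} p_0\,p_s\,p_f^{\,i-1}, & k=0,\ i\ge1,\\ p\,p_s\,p_f^{\,i-k-1}, & 1\le k\le \min\{K,i-1\},\\ 0, & \text{otherwise}.\end{cases}$$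
   Context: Model: $h(t)=1$ means successful decoding at the receiver in slot $t$; $\delta(t)$ is the (random) clock drift, in slots, of the receiver's clock relative to the transmitter's clock in slot $t$; $\Delta(t)$ is the age of information (AoI) at the receiver in slot $t$. *)

(* Defs.v *)
From HB Require Import structures.
From mathcomp Require Import all_boot all_order all_algebra.
From mathcomp Require Import all_classical all_reals topology normedtype sequences.
Set Implicit Arguments. Unset Strict Implicit. Unset Printing Implicit Defensive.
Import Order.TTheory GRing.Theory Num.Theory.
Local Open Scope ring_scope.

(* AoI recursion, given a realisation of (h(t)) and (delta(t)) and the
   initial value Delta(0) = d0:
   Delta(t+1) = delta(t+1) + 1                                   if h(t+1) = 1
              = max(1, Delta(t) + delta(t+1) - delta(t) + 1)      if h(t+1) = 0.
   Truncated nat subtraction is harmless here: (a + b + 1) - c truncates to 0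
   exactly when the integer value is <= 0, and then the max with 1 gives 1. *)
Fixpoint aoi (h : nat -> bool) (d : nat -> nat) (d0 : nat) (t : nat) : nat :=
  match t with
  | 0 => d0
  | t'.+1 => if h t'.+1 then (d t'.+1).+1
             else maxn 1 (aoi h d d0 t' + d t'.+1 + 1 - d t')
  end.

(* Probability that (delta(t), Delta(t)) = (k, i), where h(0..t) are i.i.d.  Computed as the (finite) sum over all realisations of
   (h(0..t), delta(0..t)) of their product probability. *)
Definition joint_prob (R : realType) (ps p0 p : R) (K d0 t k i : nat) : R :=
  \sum_(hh : {ffun 'I_t.+1 -> bool})
   \sum_(dd : {ffun 'I_t.+1 -> 'I_K.+1})
     ((\prod_(j < t.+1) (if hh j then ps else 1 - ps)) *
      (\prod_(j < t.+1) (if val (dd j) == 0%N then p0 else p)) *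
      (if (val (dd ord_max) == k) &&
          (aoi (fun n => hh (inord n)) (fun n => val (dd (inord n))) d0 t == i)
       then 1 else 0)).

Definition pi_stat (R : realType) (ps p0 p : R) (K k i : nat) : R :=
  if (k == 0%N) && (1 <= i)%N then p0 * ps * (1 - ps) ^+ (i - 1)
  else if (1 <= k)%N && (k <= minn K (i - 1))%N then p * ps * (1 - ps) ^+ (i - k - 1)
  else 0.

(* Main.v *)
Require Import Defs.
From HB Require Import structures.
From mathcomp Require Import all_boot all_order all_algebra.
From mathcomp Require Import all_classical all_reals topology normedtype sequences.
From mathcomp Require Import zify ring lra.
Import Order.TTheory GRing.Theory Num.Theory numFieldNormedType.Exports.
Set Implicit Arguments. Unset Strict Implicit. Unset Printing Implicit Defensive.
Lemma aoi_after (h : nat -> bool) (d : nat -> nat) d0 s t :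
  (1 <= s <= t)%N -> h s -> (forall j, (s < j <= t)%N -> ~~ h j) ->
  aoi h d d0 t = (d t + (t - s) + 1)%N.
Proof.
elim: t => [|t IH] /= hs Hs Hn; first lia.
have [es|ne] := eqVneq s t.+1; first by subst s; rewrite Hs; lia.
have hst : (1 <= s <= t)%N by lia.
rewrite (negbTE (Hn t.+1 _)); last lia.
rewrite IH //; last by move=> j hj; apply: Hn; lia.
lia.
Qed.
Definition bhf (s j : nat) (b : bool) := if j == s then b else if (s < j)%N then ~~ b else true.
Definition Bh t s (hh : {ffun 'I_t.+1 -> bool}) := [forall j : 'I_t.+1, bhf s j (hh j)].
Definition Nh t (hh : {ffun 'I_t.+1 -> bool}) := [forall j : 'I_t.+1, (0 < j)%N ==> ~~ hh j].
Definition Ab t K d0 k i (hh : {ffun 'I_t.+1 -> bool}) (dd : {ffun 'I_t.+1 -> 'I_K.+1}) :=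
  (val (dd ord_max) == k) &&
  (aoi (fun n => hh (inord n)) (fun n => val (dd (inord n))) d0 t == i).
Definition Bb t K k i (hh : {ffun 'I_t.+1 -> bool}) (dd : {ffun 'I_t.+1 -> 'I_K.+1}) :=
  [&& (k < i)%N, (val (dd ord_max) == k) & Bh (t - (i - k - 1)) hh].

Lemma key t K d0 k i (hh : {ffun 'I_t.+1 -> bool}) (dd : {ffun 'I_t.+1 -> 'I_K.+1}) : (i <= t)%N -> ~~ Nh hh -> Ab d0 k i hh dd = Bb k i hh dd.
Proof.
move=> it /forallPn [j0]; rewrite negb_imply negbK => /andP [j0p hj0].
set h' := fun n => hh (inord n).
have h'E : forall j : 'I_t.+1, h' j = hh j by move=> j; rewrite /h' inord_val.
pose P := fun n => (0 < n <= t)%N && h' n.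
have exP : exists n, P n by exists j0; rewrite /P h'E hj0 j0p -ltnS ltn_ord.
have ubP : forall n, P n -> (n <= t)%N by move=> n /andP [/andP [_ ->]].
case: (ex_maxnP exP ubP) => L /andP [/andP [L0 Lt] hL] Lmax.
have Hn : forall j, (L < j <= t)%N -> ~~ h' j.
  move=> j hj; apply/negP => hj'.
  have := Lmax j; rewrite /P hj' andbT; lia.
rewrite /Ab /Bb (aoi_after _ _ (s := L)) //; last lia.
have -> : (inord t : 'I_t.+1) = ord_max by apply: val_inj; rewrite /= inordK.
set dk := val (dd ord_max).
have [ki|ik] := ltnP k i; last first.
  rewrite /= ; apply/negbTE; apply/negP => /andP [/eqP dkE /eqP]; lia.
rewrite /=.
have BhE : Bh (t - (i - k - 1)) hh = (t - (i - k - 1) == L).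
  set s := t - (i - k - 1).
  apply/idP/idP.
  - move=> /forallP Hb.
    have s1 : (1 <= s <= t)%N by lia.
    have hs : h' s.
      have := Hb (inord s); rewrite /bhf inordK ?eqxx; last lia.
      by [].
    have sL : (s <= L)%N by apply: Lmax; rewrite /P hs; lia.
    rewrite eqn_leq sL /=; rewrite leqNgt; apply/negP => sL'.
    have := Hb (inord L); rewrite /bhf inordK; last lia.
    have -> : (L == s) = false by apply/negbTE; lia.
    by rewrite sL' -/(h' L) hL.
  - move=> /eqP ->; apply/forallP => j; rewrite /bhf.
    case: eqP => [jL|jL]; first by rewrite -h'E jL.
    case: ifP => // Lj; rewrite -h'E; apply: Hn.
    by rewrite Lj -ltnS ltn_ord.
rewrite BhE.
case: (dk =P k) => [->|] //=.
apply/eqP/eqP; lia.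
Qed.


Local Open Scope classical_set_scope.
Local Open Scope ring_scope.

Lemma prod_ind (R : comRingType) (I : finType) (P : pred I) :
  \prod_(j : I) (if P j then 1 else 0 : R) = if [forall j, P j] then 1 else 0.
Proof.
case: ifP => [/forallP H|/negbT/forallPn [j Pj]].
  by apply: big1 => j _; rewrite H.
by rewrite (bigD1 j) //= (negbTE Pj) mul0r.
Qed.

Lemma sum_ffun_prod (R : comRingType) (I J : finType) (F : I -> J -> R) :
  \sum_(f : {ffun I -> J}) \prod_i F i (f i) = \prod_i \sum_j F i j.
Proof. by rewrite bigA_distr_bigA. Qed.

Lemma forall_max n K (dd : {ffun 'I_n.+1 -> 'I_K.+1}) k :
  [forall j, (j == ord_max) ==> (val (dd j) == k)] = (val (dd ord_max) == k).
Proof.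
apply/forallP/idP => [H|H j]; first by have := H ord_max; rewrite eqxx.
by apply/implyP => /eqP ->.
Qed.

Lemma prod_g (R : comRingType) (a b : R) s n : (s <= n)%N ->
  \prod_(j < n.+1) (if val j == s then a else if (s < val j)%N then b else 1) = a * b ^+ (n - s).
Proof.
elim: n => [|n IH] hs.
  have s0 : s = 0%N by lia.
  subst s; rewrite big_ord_recr big_ord0 /=. rewrite mul1r subnn expr0 mulr1. by [].
rewrite big_ord_recr /=.
have [es|ne] := eqVneq s n.+1.
  subst s; rewrite subnn expr0 mulr1 big1 ?mul1r // => j _.
  have := ltn_ord j => hj; case: eqP => [?|_]; first lia.
  by case: ifP => // ?; lia.
rewrite IH; last lia.
rewrite ifT; last lia.
by rewrite subSn ?exprSr ?mulrA //; lia.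
Qed.

Definition wh (R : ringType) (ps : R) (b : bool) := if b then ps else 1 - ps.
Definition wd (R : ringType) K (p0 p : R) (x : 'I_K.+1) := if val x == 0%N then p0 else p.

Lemma sum_wd (R : comRingType) K (p0 p : R) : p0 + K%:R * p = 1 ->
  \sum_(x : 'I_K.+1) wd p0 p x = 1.
Proof.
move=> hs; rewrite big_ord_recl /wd /=.
under eq_bigr => x _ do rewrite /bump /=.
by rewrite sumr_const card_ord -mulr_natl.
Qed.

Lemma sumPd (R : comRingType) K (p0 p : R) t : p0 + K%:R * p = 1 ->
  \sum_(dd : {ffun 'I_t.+1 -> 'I_K.+1}) \prod_j wd p0 p (dd j) = 1.
Proof.
move=> hs; rewrite (sum_ffun_prod (fun _ x => wd p0 p x)); apply: big1 => j _; exact: sum_wd.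
Qed.

Lemma split_sum (R : comRingType) t K (Ph : {ffun 'I_t.+1 -> bool} -> R)
  (Pd ID : {ffun 'I_t.+1 -> 'I_K.+1} -> R) (IH : {ffun 'I_t.+1 -> bool} -> R) c :
  \sum_hh \sum_dd (Ph hh * Pd dd * (c * IH hh * ID dd)) =
  c * (\sum_hh Ph hh * IH hh) * (\sum_dd Pd dd * ID dd).
Proof.
rewrite -mulrA big_distrlr mulr_sumr; apply: eq_bigr => hh _.
rewrite mulr_sumr; apply: eq_bigr => dd _ /=; rewrite [RHS]/=; ring.
Qed.

Lemma sumN (R : comRingType) K (ps p0 p : R) t : p0 + K%:R * p = 1 ->
  \sum_(hh : {ffun 'I_t.+1 -> bool}) \sum_(dd : {ffun 'I_t.+1 -> 'I_K.+1})
    ((\prod_j wh ps (hh j)) * (\prod_j wd p0 p (dd j)) * (if Nh hh then 1 else 0))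
  = (1 - ps) ^+ t.
Proof.
move=> hs.
set Ph := (fun hh : {ffun 'I_t.+1 -> bool} => \prod_j wh ps (hh j)).
set Pd := (fun dd : {ffun 'I_t.+1 -> 'I_K.+1} => \prod_j wd p0 p (dd j)).
have E := split_sum Ph Pd (fun _ => 1) (fun hh => if Nh hh then 1 else 0) 1.
transitivity (\sum_hh \sum_dd (Ph hh * Pd dd * (1 * (if Nh hh then 1 else 0) * 1))).
  by apply: eq_bigr => hh _; apply: eq_bigr => dd _; rewrite mul1r mulr1.
rewrite E mul1r (eq_bigr _ (fun dd _ => mulr1 _)) sumPd // mulr1 {E}.
rewrite /Nh; under eq_bigr => hh _ do rewrite -prod_ind -big_split /=.
rewrite (sum_ffun_prod (fun (i : 'I_t.+1) b => wh ps b * (if (0 < i)%N ==> ~~ b then 1 else 0))).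
rewrite big_ord_recl big_bool /= /wh /=.
under eq_bigr => j _ do rewrite big_bool /=.
by rewrite prodr_const card_ord !mulr1 mulr0 add0r addrC subrK mul1r.
Qed.

Lemma sumB (R : realType) K (ps p0 p : R) t k i : p0 + K%:R * p = 1 ->
  (k <= K)%N -> (1 <= i)%N -> (i <= t)%N ->
  \sum_(hh : {ffun 'I_t.+1 -> bool}) \sum_(dd : {ffun 'I_t.+1 -> 'I_K.+1})
    ((\prod_j wh ps (hh j)) * (\prod_j wd p0 p (dd j)) * (if Bb k i hh dd then 1 else 0))
  = pi_stat ps p0 p K k i.
Proof.
move=> hs kK i1 it.
set s := (t - (i - k - 1))%N.
set Ph := (fun hh : {ffun 'I_t.+1 -> bool} => \prod_j wh ps (hh j)).
set Pd := (fun dd : {ffun 'I_t.+1 -> 'I_K.+1} => \prod_j wd p0 p (dd j)).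
set IH := (fun hh : {ffun 'I_t.+1 -> bool} => \prod_(j : 'I_t.+1) (if bhf s j (hh j) then 1 else 0 : R)).
set ID := (fun dd : {ffun 'I_t.+1 -> 'I_K.+1} =>
   \prod_(j : 'I_t.+1) (if (j == ord_max) ==> (val (dd j) == k) then 1 else 0 : R)).
set c : R := if (k < i)%N then 1 else 0.
transitivity (\sum_hh \sum_dd (Ph hh * Pd dd * (c * IH hh * ID dd))).
  apply: eq_bigr => hh _; apply: eq_bigr => dd _; congr (_ * _).
  rewrite /IH /ID /c !prod_ind forall_max /Bb /Bh.
  by case: (k < i)%N; case: (_ == k); case: [forall _, _]; rewrite /= ?mulr1 ?mulr0 ?mul0r.
rewrite split_sum.
have EH : \sum_hh Ph hh * IH hh = ps * (1 - ps) ^+ (t - s).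
  rewrite -prod_g; last by rewrite /s; lia.
  under eq_bigr => hh _ do rewrite /Ph /IH -big_split /=.
  rewrite (sum_ffun_prod (fun (j : 'I_t.+1) b => wh ps b * (if bhf s j b then 1 else 0))).
  apply: eq_bigr => j _; rewrite big_bool /bhf /wh /=.
  by case: eqP => _; case: (s < j)%N => /=; ring.
have ED : \sum_dd Pd dd * ID dd = wd p0 p (inord k : 'I_K.+1).
  under eq_bigr => dd _ do rewrite /Pd /ID -big_split /=.
  rewrite (sum_ffun_prod (fun (j : 'I_t.+1) x => wd p0 p x *
     (if (j == ord_max) ==> (val x == k) then 1 else 0))).
  rewrite (bigD1 ord_max) //= [X in _ * X]big1 ?mulr1; last first.
    move=> j hj; rewrite (negbTE hj) /=.
    under eq_bigr => x _ do rewrite mulr1.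
    exact: sum_wd.
  rewrite (bigD1 (inord k)) //= inordK //= (_ : (k == k) = true); last by apply/eqP.
  rewrite eqxx /= mulr1 big1 ?addr0 // => x hx /=.
  have -> : (val x == k) = false.
    apply/negbTE; apply: contra hx => /eqP <-; apply/eqP; apply: val_inj.
    by rewrite /= inordK.
  by rewrite mulr0.
rewrite EH ED /c /pi_stat /wd.
have -> : (val (inord k : 'I_K.+1) == 0%N) = (k == 0%N) by rewrite /= inordK.
have [ki|ik] := ltnP k i; last first.
  rewrite !mul0r ifF; last by apply/negbTE; lia.
  by rewrite ifF //; apply/negbTE; lia.
have -> : (t - s = i - k - 1)%N by rewrite /s; lia.
have [k0|k0] := eqVneq k 0%N.
  subst k; rewrite i1 /= subn0; ring.
rewrite /= ifT; last lia.
ring.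
Qed.

Lemma bound (R : realType) (ps p0 p : R) (K d0 : nat) t k i :
  0 < ps < 1 -> 0 <= p0 -> 0 <= p -> p0 + K%:R * p = 1 ->
  (k <= K)%N -> (1 <= i)%N -> (i <= t)%N ->
  `|joint_prob ps p0 p K d0 t k i - pi_stat ps p0 p K k i| <= (1 - ps) ^+ t.
Proof.
move=> /andP [ps0 ps1] p00 pp0 hs kK i1 it.
have E : joint_prob ps p0 p K d0 t k i =
  \sum_(hh : {ffun 'I_t.+1 -> bool}) \sum_(dd : {ffun 'I_t.+1 -> 'I_K.+1})
    ((\prod_j wh ps (hh j)) * (\prod_j wd p0 p (dd j)) * (if Ab d0 k i hh dd then 1 else 0)) by [].
rewrite E -(sumB ps hs kK i1 it) -(sumN ps t hs) -sumrB.
apply: le_trans (ler_norm_sum _ _ _) _; apply: ler_sum => hh _.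
rewrite -sumrB; apply: le_trans (ler_norm_sum _ _ _) _; apply: ler_sum => dd _.
rewrite -mulrBr normrM ger0_norm; last first.
  apply: mulr_ge0; apply: prodr_ge0 => j _.
    by rewrite /wh; case: (hh j); lra.
  by rewrite /wd; case: (_ == _).
apply: ler_wpM2l.
  apply: mulr_ge0; apply: prodr_ge0 => j _.
    by rewrite /wh; case: (hh j); lra.
  by rewrite /wd; case: (_ == _).
case N: (Nh hh).
  by case: (Ab _ _ _ _ _); case: (Bb _ _ _ _); rewrite ?subrr ?normr0 ?subr0 ?normr1 ?sub0r ?normrN ?normr1.
by rewrite key ?N // subrr normr0.
Qed.

Theorem lemma2 (R : realType) (ps p0 p : R) (K d0 : nat)
  (hps : 0 < ps < 1) (hK : (1 <= K)%N)
  (hp0 : 0 <= p0 <= 1) (hp : 0 <= p <= 1) (hsum : p0 + K%:R * p = 1)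
  (hd0 : (1 <= d0)%N) :
  forall k i : nat, (k <= K)%N -> (1 <= i)%N ->
    (fun t : nat => joint_prob ps p0 p K d0 t k i) @ \oo --> pi_stat ps p0 p K k i.
Proof.
move=> k i kK i1.
have z1 : `|1 - ps| < 1 by case/andP: hps => ? ?; rewrite ger0_norm; lra.
have := cvg_expr z1 => /cvgrPdist_le Hg.
apply/cvgrPdist_le => e e0.
apply: filterS2 (Hg e e0) (_ : \forall t \near \oo, (i <= t)%N) => [t Ht it|]; last by exists i.
rewrite distrC; apply: le_trans (bound d0 hps _ _ hsum kK i1 it) _.
- by case/andP: hp0.
- by case/andP: hp.
by move: Ht; rewrite sub0r normrN ger0_norm // exprn_ge0 //; case/andP: hps => ? ?; lra.
Qed.
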